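(* Let $q$ be a prime power and $1\le t_i\le t_o\le s$. If there exists a linear $(t_i,t_o,s,q)$-AONT, then there exists a linear $(t_i',t_o,s,q)$-AONT for every $t_i'$ with $1\le t_i'\le t_i$.
   Context: A linear $(t_i,t_o,s,q)$-AONT is given by an invertible $s\times s$ matrix $M$ over $\mathbb{F}_q$ defining the map $\mathbf{x}\mapsto\mathbf{y}=\mathbf{x}M^{-1}$ on row vectors of $\mathbb{F}_q^s$, such that for every set $I$ of $t_i$ input coordinates and every set $J$ of $s-t_o$ output coordinates, the pair $((x_i)_{i\in I},(y_j)_{j\in J})$ takes every value in $\mathbb{F}_q^{t_i+s-t_o}$ equally often as $\mathbf{x}$ ranges over $\mathbb{F}_q^s$. Equivalently, $M$ is invertible and every $t_o\times t_i$ submatrix of $M$ has rank $t_i$. *)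

(* Defs.v *)
From mathcomp Require Import all_boot all_algebra.
Set Implicit Arguments. Unset Strict Implicit. Unset Printing Implicit Defensive.
Import GRing.Theory.
Local Open Scope ring_scope.

(* A linear (t_i, t_o, s, q)-AONT over the finite field F (q = #|F|) is
   given by an invertible s x s matrix M such that every t_o x t_i
   submatrix of M (rows selected by an injective f, columns by an
   injective g) has rank t_i. *)
Definition linear_AONT (F : fieldType) (ti to s : nat) (M : 'M[F]_s) : Prop :=
  M \in unitmx /\
  forall (f : 'I_to -> 'I_s) (g : 'I_ti -> 'I_s),
    injective f -> injective g -> \rank (mxsub f g M) = ti.

(* Main.v *)
Require Import Defs.
From mathcomp Require Import all_boot all_algebra zify.
Local Open Scope ring_scope.
Import GRing.Theory.

Lemma rank_colsub_widen (F : fieldType) m n n' (le : (n' <= n)%N) (A : 'M[F]_(m, n)) :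
  \rank A = n -> \rank (mxsub id (widen_ord le) A) = n'.
Proof.
move=> rA.
have -> : mxsub id (widen_ord le) A = A *m (pid_mx n' : 'M_(n, n')).
  have -> : (pid_mx n' : 'M[F]_(n, n')) = mxsub id (widen_ord le) (1%:M : 'M[F]_n).
    by apply/matrixP=> i j; rewrite !mxE -!val_eqE/=; case: eqP => // ->; rewrite ltn_ord.
  by rewrite mulmx_colsub mulmx1.
rewrite -mxrank_tr trmx_mul mxrankMfree; last by rewrite /row_free mxrank_tr rA.
by rewrite mxrank_tr rank_pid_mx.
Qed.

Lemma extend_inj s ti' ti (le1 : (ti' <= ti)%N) (le2 : (ti <= s)%N)
  (g' : 'I_ti' -> 'I_s) : (0 < ti')%N -> injective g' ->
  exists g : 'I_ti -> 'I_s, injective g /\ forall j, g (widen_ord le1 j) = g' j.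
Proof.
move=> ti'0 ig'.
pose x0 := g' (Ordinal ti'0).
pose C := ~: [set g' j | j in 'I_ti'].
have cC : #|C| = (s - ti')%N by rewrite cardsCs setCK card_imset // !card_ord.
pose g := fun i : 'I_ti =>
  if (i < ti')%N =P true is ReflectT h then g' (Ordinal h)
  else nth x0 (enum C) (i - ti').
exists g; split; last first.
  move=> j; rewrite /g; case: eqP => [h|]; last by rewrite /= ltn_ord.
  by congr g'; apply: val_inj.
have memC (i : 'I_ti) : ~~ (i < ti')%N -> nth x0 (enum C) (i - ti') \in C.
  move=> hi; rewrite -mem_enum; apply: mem_nth; rewrite -cardE cC.
  have := ltn_ord i; have := leq_trans (ltn_ord i) le2; lia.
have notC j : g' j \notin C by rewrite inE negbK imset_f.
move=> i k; rewrite /g.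
case: eqP => [hi|hi]; case: eqP => [hk|hk].
- by move/ig' => /(congr1 val) /= eik; apply: val_inj.
- move=> e; have := memC k (introN idP hk); rewrite -e; by rewrite (negbTE (notC _)).
- move=> e; have := memC i (introN idP hi); rewrite e; by rewrite (negbTE (notC _)).
- move=> e; have u := enum_uniq (mem C).
  have bi : (i - ti' < size (enum C))%N.
    rewrite -cardE cC; have := ltn_ord i; have := leq_trans (ltn_ord i) le2; lia.
  have bk : (k - ti' < size (enum C))%N.
    rewrite -cardE cC; have := ltn_ord k; have := leq_trans (ltn_ord k) le2; lia.
  move/eqP: e; rewrite (nth_uniq x0 bi bk u) => /eqP e.
  apply: val_inj => /=; move/negP: hi; move/negP: hk; lia.
Qed.

Theorem mainTheorem9 (F : finFieldType) (ti to s : nat) :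
  (1 <= ti)%N -> (ti <= to)%N -> (to <= s)%N ->
  (exists M : 'M[F]_s, linear_AONT ti to M) ->
  forall ti' : nat, (1 <= ti')%N -> (ti' <= ti)%N ->
    exists M' : 'M[F]_s, linear_AONT ti' to M'.
Proof.
move=> h1 h2 h3 [M [uM hM]] ti' h1' le1.
exists M; split => // f g' fi gi'.
have le2 : (ti <= s)%N := leq_trans h2 h3.
have [g [gi hg]] := @extend_inj _ _ _ le1 le2 g' h1' gi'.
have -> : mxsub f g' M = mxsub id (widen_ord le1) (mxsub f g M).
  by apply/matrixP => i j; rewrite !mxE hg.
by apply: rank_colsub_widen; exact: hM.
Qed.
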